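(* Let $(X,T)$ be a CAM $G$-system and let $H\subseteq G$ be a finite index normal subgroup. If there exists $x\in X$ whose $H$-orbit is dense in $X$, then the restricted action of $H$ on $X$ is CAM.
   Context: Let $G$ be a countable discrete group. A topological $G$-system $(X,T)$ consists of a compact metric space $X$ and an action $T\colon G\to\mathrm{Homeo}(X)$, $g\mapsto T_g$. The system is topologically transitive if for all nonempty open $U,V\subseteq X$ there is $g\in G$ with $T_gU\cap V\neq\emptyset$; the action is faithful if $T_g=\mathrm{id}_X$ only when $g$ is the identity. A point is periodic if its $G$-orbit is finite. The system is chaotic almost minimal (CAM) if: (1) it is topologically transitive and the action is faithful; (2) the periodic points are dense in $X$; (3) every proper closed $T$-invariant subset of $X$ is finite. *)

(* Defs.v *)
From HB Require Import structures.
From mathcomp Require Import all_boot all_order all_algebra.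
From mathcomp Require Import monoid.
From mathcomp Require Import all_classical all_reals all_analysis.

Set Implicit Arguments.
Unset Strict Implicit.
Unset Printing Implicit Defensive.

Local Open Scope classical_set_scope.
Local Open Scope group_scope.

Section CAMDefs.
Context {G : groupType} {X : topologicalType}.

(* T : G -> Homeo(X) is a (left) group action by homeomorphisms.  Given the
   action laws, continuity of every T g makes each T g a homeomorphism
   (with inverse T g^-1). *)
Definition is_action (T : G -> X -> X) : Prop :=
  [/\ T 1 = id,
      (forall g h x, T (g * h) x = T g (T h x)) &
      (forall g, continuous (T g))].

(* The notions below are for the action T restricted to a subset S of G
   (S = [set: G] gives the G-system itself, S = H the restricted action). *)
Definition orbit_on (S : set G) (T : G -> X -> X) (x : X) : set X :=
  [set T g x | g in S].

Definition topologically_transitive_on (S : set G) (T : G -> X -> X) : Prop :=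
  forall U V : set X, open U -> open V -> U !=set0 -> V !=set0 ->
    exists2 g, S g & (T g @` U `&` V) !=set0.

Definition faithful_on (S : set G) (T : G -> X -> X) : Prop :=
  forall g, S g -> T g = id -> g = 1.

Definition periodic_point_on (S : set G) (T : G -> X -> X) (x : X) : Prop :=
  finite_set (orbit_on S T x).

Definition invariant_on (S : set G) (T : G -> X -> X) (A : set X) : Prop :=
  forall g, S g -> T g @` A `<=` A.

Definition CAM_on (S : set G) (T : G -> X -> X) : Prop :=
  [/\ topologically_transitive_on S T /\ faithful_on S T,
      dense [set x | periodic_point_on S T x] &
      (forall A : set X, closed A -> invariant_on S T A -> A <> [set: X] ->
         finite_set A)].

End CAMDefs.

Section SubgroupDefs.
Context {G : groupType}.

Definition is_subgroup (H : set G) : Prop :=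
  [/\ H 1, (forall a b, H a -> H b -> H (a * b)) & (forall a, H a -> H a^-1)].

Definition is_normal (H : set G) : Prop :=
  forall g h, H h -> H (g^-1 * h * g).

Definition finite_index (H : set G) : Prop :=
  finite_set [set [set g * h | h in H] | g in [set: G]].

End SubgroupDefs.

(* Main.v *)
Require Import Defs.
From HB Require Import structures.
From mathcomp Require Import all_boot all_order all_algebra.
From mathcomp Require Import monoid.
From mathcomp Require Import all_classical all_reals all_analysis.
From mathcomp Require Import finmap.

Local Open Scope classical_set_scope.

Section Helpers.
Local Open Scope group_scope.

Lemma cover_interior (X : topologicalType) (I : eqType) (F : I -> set X)
  (s : seq I) (U : set X) :
  (forall i, i \in s -> closed (F i)) -> open U -> U !=set0 ->
  U `<=` \big[setU/set0]_(i <- s) F i ->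
  exists i, i \in s /\ exists V, [/\ open V, V !=set0 & V `<=` F i].
Proof.
elim: s U => [|i s IH] U cF oU [u Uu] sub.
  by move: (sub u Uu); rewrite big_nil.
have [[y [Uy nFy]]|nD] := pselect ((U `\` F i) !=set0).
  have [||||j [js VV]] := IH (U `\` F i).
  - by move=> j js; apply: cF; rewrite inE js orbT.
  - by apply: openI => //; rewrite openC; apply: cF; rewrite inE eqxx.
  - by exists y.
  - move=> z [Uz nFz]; move: (sub z Uz); rewrite big_cons => -[//|//].
  by exists j; split => //; rewrite inE js orbT.
exists i; split; first by rewrite inE eqxx.
exists U; split => //; first by exists u.
move=> z Uz; apply: contrapT => nFz; apply: nD; by exists z.
Qed.

Variables (G : groupType) (X : topologicalType) (T : G -> X -> X).
Hypothesis act : is_action T.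

Lemma actM g h x : T (g * h) x = T g (T h x).
Proof. by case: act. Qed.
Lemma act1 x : T 1 x = x.
Proof. by case: act => -> . Qed.
Lemma actK g x : T g^-1 (T g x) = x.
Proof. by rewrite -actM mulVg act1. Qed.
Lemma actKV g x : T g (T g^-1 x) = x.
Proof. by rewrite -actM mulgV act1. Qed.

Lemma image_preimage g (S : set X) : T g @` S = T g^-1 @^-1` S.
Proof.
apply/seteqP; split => y.
  by move=> [s Ss <-]; rewrite /= actK.
by move=> /= Sy; exists (T g^-1 y) => //; rewrite actKV.
Qed.

Lemma closed_image g (S : set X) : closed S -> closed (T g @` S).
Proof.
move=> cS; rewrite image_preimage.
have [_ _ ct] := act.
by move: (ct g^-1) => /continuous_closedP; apply.
Qed.

End Helpers.

Theorem corollary3p6 (G : groupType) (R : realType) (X : metricType R)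
  (T : G -> X -> X) (H : set G) :
  countable [set: G] ->
  compact [set: X] ->
  is_action T ->
  CAM_on [set: G] T ->
  is_subgroup H -> is_normal H -> finite_index H ->
  (exists x : X, dense (orbit_on H T x)) ->
  CAM_on H T.
Proof.
move=> _ _ act [[trG fG] dG cG] [H1 HM HV] Hn fin [x dx].
have inv_g : forall g h, H h -> forall a, T (g * h)%g a = T g (T h a).
  by move=> g h _ a; rewrite (@actM _ _ T act).
split; first split.
- move=> U V oU oV U0 V0.
  have [u [Uu [h1 Hh1 hu]]] := dx U U0 oU.
  have [v [Vv [h2 Hh2 hv]]] := dx V V0 oV.
  subst u v.
  exists (h2 * h1^-1)%g; first by apply: HM => //; apply: HV.
  exists (T h2 x); split => //; exists (T h1 x) => //.
  by rewrite -(@actM _ _ T act) // mulgVK.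
- by move=> g _; apply: fG.
- move=> O O0 oO; have [y [Oy Py]] := dG O O0 oO.
  exists y; split => //; apply: sub_finite_set Py.
  by move=> z [g Hg <-]; exists g.
move=> A cA iA nA.
pose C := [set [set (g * h)%g | h in H] | g in [set: G]].
pose F := fun c : set G => \bigcup_(g in c) T g @` A.
have FE : forall g0, F [set (g0 * h)%g | h in H] = T g0 @` A.
  move=> g0; apply/seteqP; split => y.
    move=> [g [h Hh <-] [a Aa <-]]; exists (T h a); last by rewrite (@actM _ _ T act).
    by apply: (iA h Hh); exists a.
  move=> [a Aa <-]; exists (g0 * 1)%g; first by exists 1%g.
  by exists a => //; rewrite mulg1.
pose B := \bigcup_(c in C) F c.
have BT : forall g a, A a -> B (T g a).
  move=> g a Aa; exists [set (g * h)%g | h in H]; first by exists g.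
  by rewrite FE; exists a.
have AB : A `<=` B by move=> a Aa; rewrite -(@act1 _ _ T act a); exact: BT.
have FC : forall c, C c -> closed (F c).
  by move=> c [g _ <-]; rewrite FE; apply: (@closed_image _ _ T act).
have [BnT|BeT] := pselect (B <> [set: X]).
  apply: (sub_finite_set AB); apply: cG => //.
  - by apply: closed_bigcup.
  - move=> g _ y [z [c [g0 _ <-]]]; rewrite FE => -[a Aa <-] <-.
    by rewrite -(@actM _ _ T act) //; apply: BT.
have BE : B = [set: X] by apply: contrapT.
have [a0 nAa0] : exists a, ~ A a.
  apply: contrapT => nex; apply: nA; apply/seteqP; split => // y _.
  by apply: contrapT => nAy; apply: nex; exists y.
have [c [cs [V [oV V0 VF]]]] :
    exists i : set G, i \in fset_set C /\ exists V, [/\ open V, V !=set0 & V `<=` F i].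
  apply: (@cover_interior X _ F (fset_set C) [set: X]) => //.
  - by move=> i; rewrite in_fset_set // in_setE; apply: FC.
  - exact: openT.
  - by exists a0.
  by rewrite bigsetU_fset_set // -/B BE.
move: cs; rewrite in_fset_set // in_setE => -[g0 _ cE].
rewrite -cE FE in VF.
pose W := T g0 @^-1` V.
have oW : open W.
  by have [_ _ ct] := act; move: (ct g0) => /continuousP; apply.
have W0 : W !=set0.
  by case: V0 => v Vv; exists (T (g0^-1)%g v); rewrite /W /= (@actKV _ _ T act).
have WA : W `<=` A.
  move=> w Ww; have [a Aa e] := VF _ Ww.
  by rewrite -(@actK _ _ T act g0 w) -e (@actK _ _ T act).
have [w [Ww [h Hh hx]]] := dx W W0 oW.
exfalso; apply: nA; apply/seteqP; split => // y _.
apply: contrapT => nAy.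
have oC : open (~` A) by rewrite openC.
have [z [nAz [h' Hh' hz]]] := dx (~` A) (ex_intro _ y nAy) oC.
apply: nAz; rewrite -hz -(mulgVK h h') (@actM _ _ T act) //.
apply: (iA _ (HM _ _ Hh' (HV _ Hh))); exists (T h x) => //.
by apply: WA; rewrite hx.
Qed.
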